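(* Let $f=a_0+a_1 z+\cdots+a_mz^m\in \mathbb{Z}[z]$ be primitive (the greatest common divisor of its coefficients is $1$). Suppose there exist positive real numbers $\alpha<\beta$ and an index $j\in\{0,1,\ldots,m\}$ such that \[ |a_j| \alpha^j>\sum_{i=0,\, i\neq j}^m |a_i|\beta^i. \] Further, suppose there exist natural numbers $n$, $d$, $k$, $\ell\leq m$, and a prime $p$ with $p\nmid d$ such that $\beta-d\geq n\geq \alpha+d$, $f(n)=\pm p^k d$, $\gcd(k,\ell)=1$, $p^k$ divides $\frac{f^{(i)}(n)}{i!}$ for each $i=0, 1, \ldots,\ell-1$, and, in case $k>1$, also $p\nmid \frac{f^{(\ell)}(n)}{\ell!}$. Then $f$ is irreducible in $\mathbb{Z}[z]$.
   Context: $f^{(i)}$ denotes the $i$-th derivative of $f$ with respect to $z$. Natural numbers are positive integers. *)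

(* Defs.v *)
From HB Require Import structures.
From mathcomp Require Import all_boot all_order all_algebra.
From mathcomp Require Export reals.
Export Order.TTheory GRing.Theory Num.Theory.
Set Implicit Arguments. Unset Strict Implicit. Unset Printing Implicit Defensive.

Local Open Scope ring_scope.

Definition primitive_poly (f : {poly int}) : Prop :=
  (\big[gcdn/0%N]_(i < size f) absz (f`_i)%R)%N = 1%N.

Definition irreducible_Zpoly (f : {poly int}) : Prop :=
  [/\ f != 0, f \isn't a GRing.unit &
      forall g h : {poly int}, f = g * h ->
        g \is a GRing.unit \/ h \is a GRing.unit].

(* Main.v *)
Require Import Defs.
From HB Require Import structures.
From mathcomp Require Import all_boot all_order all_algebra.
From mathcomp Require Import reals.
From mathcomp Require Import zify.
From mathcomp.real_closed Require Import complex.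
Import Order.TTheory GRing.Theory Num.Theory.
Local Open Scope ring_scope.

Lemma coef_shift (g : {poly int}) (c : int) i :
  (g \Po ('X + c%:P))`_i = (g^`N(i)).[c].
Proof.
rewrite /comp_poly addrC (@nderiv_taylor_wide _ (size g + i.+1)).
- rewrite coef_sum (bigD1 (Ordinal (leq_addl (size g) i.+1))) //= big1.
    rewrite addr0 nderivn_map horner_map /= coefCM coefXn eqxx mulr1 //.
  move=> x hne; rewrite nderivn_map horner_map /= coefCM coefXn.
  case: (i =P x) => [hx|_]; last by rewrite mulr0.
  by exfalso; move/negP: hne; apply; apply/eqP; apply: val_inj; rewrite /= -hx.
- exact: commr_polyX.
- by rewrite size_map_polyC leq_addr.
Qed.

Lemma coef_nz_lt (G : {poly int}) i : G`_i != 0 -> (i < size G)%N.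
Proof. by move=> nz; rewrite ltnNge; apply: contra nz => h; rewrite nth_default. Qed.

Lemma minimizer (G : {poly int}) (w : nat -> nat) : G != 0 ->
  exists i0, [/\ G`_i0 != 0, (forall i, G`_i != 0 -> (w i0 <= w i)%N) &
     (forall i, (i < i0)%N -> G`_i != 0 -> (w i0 < w i)%N)].
Proof.
move=> G0.
have exP : exists N, [exists i : 'I_(size G), (G`_i != 0) && (w i == N)].
  have hs : ((size G).-1 < size G)%N by rewrite prednK // size_poly_gt0.
  exists (w (size G).-1); apply/existsP; exists (Ordinal hs).
  by rewrite /= eqxx andbT -lead_coefE lead_coef_eq0.
case: (ex_minnP exP) => mu /existsP[i1 /andP[nz1 w1]] mumin.
have exQ : exists i, (G`_i != 0) && (w i == mu) by exists i1; rewrite nz1.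
case: (ex_minnP exQ) => i0 /andP[nz0 /eqP w0] i0min.
have minw : forall i, G`_i != 0 -> (w i0 <= w i)%N.
  move=> i nzi; rewrite w0; apply: mumin; apply/existsP.
  by exists (Ordinal (@coef_nz_lt G i nzi)); rewrite /= nzi eqxx.
exists i0; split => // i lti nzi.
rewrite ltn_neqAle minw // andbT; apply/negP => /eqP he.
have := i0min i; rewrite nzi -he w0 eqxx => /(_ isT).
by rewrite leqNgt lti.
Qed.

Definition vp (p : nat) (x : int) : nat := logn p (absz x).
Arguments vp p x%_R.

Section Weight.
Variables (p k l : nat) (G H : {poly int}).
Hypotheses (pp : prime p) (G0 : G != 0) (H0 : H != 0)
  (hF : forall r, (r < l)%N -> (p ^ k %| absz ((G * H)`_r)%R)%N).
Local Notation v := (vp p).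

Lemma gauss_weight :
  exists i0 j0, [/\ G`_i0 != 0, H`_j0 != 0,
    (forall i, G`_i != 0 -> (l * v G`_i0 + k * i0 <= l * v G`_i + k * i)%N),
    (forall i, H`_i != 0 -> (l * v H`_j0 + k * j0 <= l * v H`_i + k * i)%N) &
    (k * l <= l * (v G`_i0 + v H`_j0) + k * (i0 + j0))%N].
Proof.
have [i0 [nzG minG strG]] := @minimizer G (fun i => l * v G`_i + k * i)%N G0.
have [j0 [nzH minH strH]] := @minimizer H (fun i => l * v H`_i + k * i)%N H0.
exists i0, j0; split => //.
set r := (i0 + j0)%N; set e := (v G`_i0 + v H`_j0)%N.
rewrite /vp.
have vprod x y : G`_x != 0 -> H`_y != 0 ->
    logn p (absz (G`_x * H`_y)) = addn (logn p (absz G`_x)) (logn p (absz H`_y)).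
  by move=> nx ny; rewrite abszM lognM // absz_gt0.
have ndiv : ~~ ((p ^ e.+1)%:Z %| (G * H)`_r)%Z.
  have hi0 : (i0 < r.+1)%N by rewrite ltnS leq_addr.
  rewrite coefM (bigD1 (Ordinal hi0)) //= addKn.
  rewrite rpredDr.
    rewrite dvdzE abszM /= pfactor_dvdn ?muln_gt0 ?absz_gt0 ?nzG ?nzH //.
    by rewrite -abszM vprod // ltnn.
  apply: rpred_sum => x hx.
  have hxr : (x + (r - x) = r)%N by rewrite subnKC // -ltnS.
  have [gx0|nx] := eqVneq G`_x 0; first by rewrite gx0 mul0r rpred0.
  have [hy0|ny] := eqVneq H`_(r - x) 0; first by rewrite hy0 mulr0 rpred0.
  rewrite dvdzE /= pfactor_dvdn ?abszM ?muln_gt0 ?absz_gt0 ?nx ?ny // -abszM.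
  rewrite vprod //.
  have hkx : (k * x + k * (r - x) = k * i0 + k * j0)%N by rewrite -!mulnDr hxr.
  have hxi : x != i0 :> nat by apply: contra hx => /eqP h; apply/eqP/val_inj.
  have key : (l * e < l * (v G`_x + v H`_(r - x)))%N.
    case: (ltngtP x i0) => hxi0.
    - have := strG x hxi0 nx; have := minH (r - x)%N ny.
      rewrite /e; lia.
    - have hy : (r - x < j0)%N.
        have := ltn_ord x; have hr : r = (i0 + j0)%N by []. lia.
      have := strH (r - x)%N hy ny; have := minG x nx.
      rewrite /e; lia.
    - by rewrite hxi0 eqxx in hxi.
  by move: key; rewrite ltn_mul2l => /andP[].
have c0 : (G * H)`_r != 0 by apply: contra ndiv => /eqP ->; rewrite dvdz0.
have le_e : (v (G * H)`_r <= e)%N.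
  rewrite leqNgt; apply: contra ndiv => h.
  by rewrite dvdzE /= pfactor_dvdn // absz_gt0.
case: (ltnP r l) => hrl.
- have := hF r hrl; rewrite pfactor_dvdn ?absz_gt0 // => hk.
  have hke : (k <= e)%N by apply: leq_trans le_e.
  by rewrite -/e -/r mulnC; apply: leq_trans (leq_addr _ _); rewrite leq_mul2l hke orbT.
- by rewrite -/r; apply: leq_trans (leq_addl _ _); rewrite leq_mul2l hrl orbT.
Qed.
End Weight.

Lemma vp_ndvd p x : ~~ (p %| absz x)%N -> vp p x = 0%N.
Proof. by move=> nd; rewrite /vp lognE (negbTE nd) !andbF. Qed.

Lemma weight_contra p k l (G H : {poly int}) s :
  prime p -> coprime k l -> G != 0 -> H != 0 ->
  (forall r, (r < l)%N -> (p ^ k %| absz ((G * H)`_r)%R)%N) ->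
  (0 < s)%N -> (s < l)%N -> ~~ (p %| absz (G`_s)%R)%N -> ~~ (p %| absz (H`_(l - s))%R)%N ->
  G`_0 != 0 -> H`_0 != 0 -> (vp p G`_0 + vp p H`_0 = k)%N -> False.
Proof.
move=> pp ckl G0 H0 hF s0 sl nGs nHs G00 H00 hab.
have [i0 [j0 [nzG nzH minG minH big]]] := @gauss_weight p k l G H pp G0 H0 hF.
have Gs0 : G`_s != 0 by apply: contra nGs => /eqP ->; rewrite dvdn0.
have Hs0 : H`_(l - s) != 0 by apply: contra nHs => /eqP ->; rewrite dvdn0.
have h1 := minG 0%N G00; have h2 := minG s Gs0.
have h3 := minH 0%N H00; have h4 := minH (l - s)%N Hs0.
rewrite (@vp_ndvd p _ nGs) in h2; rewrite (@vp_ndvd p _ nHs) in h4.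
move: (vp p G`_0) (vp p H`_0) hab h1 h3 => a b hab h1 h3.
have hab' : (l * a + l * b = l * k)%N by rewrite -mulnDr hab.
have hks : (k * s + k * (l - s) = k * l)%N by rewrite -mulnDr subnKC // ltnW.
have eq1 : (l * a = k * s)%N by lia.
have : (l %| k * s)%N by rewrite -eq1 dvdn_mulr.
rewrite Gauss_dvdr; last by rewrite coprime_sym.
by move=> /(dvdn_leq s0); rewrite leqNgt sl.
Qed.

Section An.
Local Open Scope complex_scope.
Variable R : realType.
Local Notation C := (R[i]).

Lemma root_annulus (f : {poly int}) m (alpha beta : R) (j : nat) :
  size f = m.+1 -> 0 < alpha -> alpha < beta -> (j <= m)%N ->
  `|f`_j|%:~R * alpha ^+ j >
      \sum_(i < m.+1 | i != j :> nat) `|f`_i|%:~R * beta ^+ i ->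
  forall z : C, (map_poly intr f).[z] = 0 ->
  `|z| < alpha%:C \/ beta%:C < `|z|.
Proof.
move=> sf a0 ab jm hyp z rz.
have [lt|ge] := boolP (`|z| < alpha%:C); first by left.
have [gt|le] := boolP (beta%:C < `|z|); first by right.
exfalso.
have rA : alpha%:C \is Num.real by apply/complex_realP; exists alpha.
have rB : beta%:C \is Num.real by apply/complex_realP; exists beta.
rewrite -real_leNgt ?normr_real // in ge.
rewrite -real_leNgt ?normr_real // in le.
have hj : (j < m.+1)%N by [].
rewrite (@horner_coef_wide _ m.+1) in rz; last by rewrite size_map_poly_id0 ?sf // intr_eq0 lead_coef_eq0 -size_poly_eq0 sf.
rewrite (bigD1 (Ordinal hj)) //= in rz.
have ez : (map_poly intr f)`_j * z ^+ j = - \sum_(i < m.+1 | i != Ordinal hj) (map_poly intr f)`_i * z ^+ i.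
  by apply/eqP; rewrite -addr_eq0 rz.
have u0 : 0 <= `|z| by [].
have ha : (`|f`_j|%:~R * alpha ^+ j)%:C <= `|(map_poly intr f)`_j * z ^+ j|.
  rewrite rmorphM rmorphXn /= normrM normrX coef_map /= -intr_norm.
  have -> : (`|f`_j|%:~R : R)%:C = `|f`_j|%:~R by rewrite rmorph_int.
  apply: ler_wpM2l; first by rewrite ler0z.
  by apply: lerXn2r => //; rewrite nnegrE ler0c ltW.
have hb : `|(map_poly intr f)`_j * z ^+ j| <= (\sum_(i < m.+1 | i != j :> nat) `|f`_i|%:~R * beta ^+ i)%:C.
  rewrite ez normrN; apply: le_trans (ler_norm_sum _ _ _) _.
  rewrite rmorph_sum /=.
  rewrite (eq_bigl (fun i : 'I_m.+1 => i != j :> nat)); last first.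
    by move=> i; congr negb; apply/eqP/eqP => [->//|h]; apply: val_inj.
  apply: ler_sum => i _.
  rewrite rmorphM rmorphXn /= normrM normrX coef_map /= -intr_norm.
  have -> : (`|f`_i|%:~R : R)%:C = `|f`_i|%:~R by rewrite rmorph_int.
  apply: ler_wpM2l; first by rewrite ler0z.
  by apply: lerXn2r => //; rewrite nnegrE ler0c ltW // (lt_trans a0 ab).
have := le_trans ha hb; rewrite lecR.
by rewrite leNgt hyp.
Qed.

Lemma prod_gt (T : eqType) (rs : seq T) (F : T -> C) (d : C) : 1 <= d ->
  rs != [::] -> (forall z, z \in rs -> d < F z) -> d < \prod_(z <- rs) F z.
Proof.
move=> d1 ne hF.
have ge1 : forall rs', (forall z, z \in rs' -> d < F z) -> 1 <= \prod_(z <- rs') F z.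
  elim=> [|z rs' IH] h; first by rewrite big_nil.
  rewrite big_cons mulr_ege1 //.
    by apply: le_trans d1 (ltW (h z _)); rewrite inE eqxx.
  by apply: IH => y hy; apply: h; rewrite inE hy orbT.
case: rs ne hF => [//|z rs'] _ hF.
rewrite big_cons; apply: lt_le_trans (hF z _) _; first by rewrite inE eqxx.
apply: ler_peMr.
  by apply: le_trans (ltW (hF z _)); [apply: le_trans d1|rewrite inE eqxx].
by apply: ge1 => y hy; apply: hF; rewrite inE hy orbT.
Qed.

Lemma factor_bound (f g h : {poly int}) m (alpha beta : R) (j n d : nat) :
  size f = m.+1 -> 0 < alpha -> alpha < beta -> (j <= m)%N ->
  `|f`_j|%:~R * alpha ^+ j >
      \sum_(i < m.+1 | i != j :> nat) `|f`_i|%:~R * beta ^+ i ->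
  (0 < d)%N -> beta - d%:R >= n%:R -> n%:R >= alpha + d%:R ->
  f = g * h -> (1 < size g)%N -> (d < `|g.[n%:Z]|)%N.
Proof.
move=> sf a0 ab jm hyp d0 hb ha fgh sg.
pose gC := map_poly (intr : int -> C) g.
pose hC := map_poly (intr : int -> C) h.
have [rs hrs] := closed_field_poly_normal gC.
have fC : map_poly (intr : int -> C) f = gC * hC by rewrite fgh rmorphM.
have nC : (n%:Z)%:~R = n%:R :> C by [].
have groot : forall z, z \in rs -> (map_poly intr f).[z] = 0 :> C.
  move=> z hz; rewrite fC hornerM.
  have : root (\prod_(a <- rs) ('X - a%:P)) z by rewrite root_prod_XsubC.
  by move/rootP => r0; rewrite hrs hornerZ r0 mulr0 mul0r.
have dist : forall z, z \in rs -> d%:R < `|n%:R - z| :> C.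
  move=> z hz; have := @root_annulus f m alpha beta j sf a0 ab jm hyp z (groot z hz).
  case => hz'.
  - apply: lt_le_trans (lerB_dist _ _); rewrite normr_nat.
    apply: le_lt_trans (_ : n%:R - alpha%:C < _); last by rewrite ltrD2l ltrN2.
    have -> : n%:R - alpha%:C = (n%:R - alpha)%:C by rewrite rmorphB rmorph_nat.
    have -> : d%:R = (d%:R : R)%:C by rewrite rmorph_nat.
    by rewrite lecR lerBrDr addrC.
  - rewrite distrC; apply: lt_le_trans (lerB_dist _ _); rewrite normr_nat.
    apply: le_lt_trans (_ : beta%:C - n%:R < _); last by rewrite ltrD2r.
    have -> : beta%:C - n%:R = (beta - n%:R)%:C by rewrite rmorphB rmorph_nat.
    have -> : d%:R = (d%:R : R)%:C by rewrite rmorph_nat.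
    by rewrite lecR lerBrDr addrC -lerBrDr.
have ev : gC.[n%:R] = (g.[n%:Z])%:~R.
  by rewrite -nC /gC horner_map.
have g0 : g != 0 by rewrite -size_poly_gt0 (ltn_trans _ sg).
have lg : 1 <= `|lead_coef gC|.
  rewrite /gC lead_coef_map_inj //; last exact: intr_inj.
  rewrite -intr_norm ler1z.
  by rewrite -abszE lez_nat absz_gt0 lead_coef_eq0.
have rsne : rs != [::].
  have sgC : size gC = size g.
    by rewrite size_map_inj_poly //; exact: intr_inj.
  apply/eqP => rs0; move: sg; rewrite -sgC hrs rs0 big_nil alg_polyC.
  by rewrite size_polyC ltnNge leq_b1.
have : d%:R < `|gC.[n%:R]|.
  rewrite hrs hornerZ horner_prod normrM normr_prod.
  under eq_bigr => z _ do rewrite hornerXsubC.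
  have hp : d%:R < \prod_(z <- rs) `|n%:R - z| :> C.
    by apply: prod_gt => //; rewrite ler1n.
  apply: lt_le_trans hp _.
  by rewrite ler_peMl // prodr_ge0.
rewrite ev -intr_norm -[d%:R]/((d%:Z)%:~R) ltr_int -abszE.
by rewrite ltz_nat.
Qed.
End An.


Lemma const_unit (f g h : {poly int}) : primitive_poly f -> f != 0 ->
  f = g * h -> (size g <= 1)%N -> g \is a GRing.unit.
Proof.
move=> prim f0 fgh sg.
move: fgh; rewrite (size1_polyC sg); set c := g`_0 => fgh.
have ef : forall x : nat, f`_x = c * h`_x by move=> x; rewrite fgh coefCM.
have dc : (absz c %| 1)%N.
  rewrite -prim; apply/dvdn_biggcdP => i _; rewrite ef.
  by rewrite abszM dvdn_mulr.
move: dc; rewrite dvdn1 => /eqP c1.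
rewrite poly_unitE size_polyC.
have -> : c != 0 by rewrite -absz_gt0 c1.
clear ef; case: c c1 {fgh} => [[|[|n]]|[|n]] //= _.
- by rewrite coefC unitr1.
- by rewrite coefC NegzE unitrN1.
Qed.

Theorem theorem2 (R : realType) (f : {poly int}) (m : nat) :
  size f = m.+1 ->
  primitive_poly f ->
  forall (alpha beta : R) (j : nat),
    0 < alpha -> alpha < beta -> (j <= m)%N ->
    `|f`_j|%:~R * alpha ^+ j >
      \sum_(i < m.+1 | i != j :> nat) `|f`_i|%:~R * beta ^+ i ->
  forall (n d k l p : nat),
    (0 < n)%N -> (0 < d)%N -> (0 < k)%N -> (0 < l)%N -> (l <= m)%N ->
    prime p -> ~~ (p %| d)%N ->
    beta - d%:R >= n%:R -> n%:R >= alpha + d%:R ->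
    (f.[n%:Z] = (p ^ k * d)%:Z \/ f.[n%:Z] = - (p ^ k * d)%:Z) ->
    coprime k l ->
    (forall i : nat, (i < l)%N -> ((p ^ k)%:Z %| (f^`N(i)).[n%:Z])%Z) ->
    ((1 < k)%N -> ~~ ((p%:Z) %| (f^`N(l)).[n%:Z])%Z) ->
  irreducible_Zpoly f.
Proof.
move=> sf prim alpha beta j a0 ab jm hyp n d k l p n0 d0 k0 l0 lm pp pd hb ha
  hfn ckl hdiv hl.
have f0 : f != 0 by rewrite -size_poly_eq0 sf.
have m0 : (0 < m)%N by apply: leq_trans lm.
split => //.
  by rewrite poly_unitE sf eqSS (gtn_eqF m0).
move=> g h fgh.
case: (leqP (size g) 1) => sg; first by left; apply: const_unit fgh sg.
case: (leqP (size h) 1) => sh.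
  by right; apply: (@const_unit f h g) => //; rewrite mulrC.
exfalso.
have bg := @factor_bound R f g h m alpha beta j n d sf a0 ab jm hyp d0 hb ha fgh sg.
have bh := @factor_bound R f h g m alpha beta j n d sf a0 ab jm hyp d0 hb ha
  (etrans fgh (mulrC _ _)) sh.
set A := absz g.[n%:Z] in bg; set B := absz h.[n%:Z] in bh.
have AB : (A * B = p ^ k * d)%N.
  rewrite /A /B -abszM -hornerM -fgh.
  by case: hfn => ->; rewrite ?abszN.
have pk0 : (0 < p ^ k)%N by rewrite expn_gt0 prime_gt0.
have pdiv : forall X Y, (X * Y = p ^ k * d)%N -> (d < X)%N -> (p %| X)%N.
  move=> X Y XY dX; apply/negP => npX.
  have cX : coprime X (p ^ k)%N.
    by apply: coprimeXr; rewrite coprime_sym prime_coprime //; apply/negP.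
  have : (X %| p ^ k * d)%N by rewrite -XY dvdn_mulr.
  rewrite Gauss_dvdr // => /(dvdn_leq d0); by rewrite leqNgt dX.
have pA := pdiv A B AB bg.
have pB := pdiv B A (etrans (mulnC _ _) AB) bh.
have A0 : (0 < A)%N by apply: leq_ltn_trans bg.
have B0 : (0 < B)%N by apply: leq_ltn_trans bh.
case: (ltnP 1 k) => k1; last first.
  have k1' : k = 1%N by apply/eqP; rewrite eqn_leq k1 k0.
  move: AB; rewrite k1' expn1 => AB.
  have : (p * p %| p * d)%N by rewrite -AB dvdn_mul.
  by rewrite dvdn_pmul2l ?prime_gt0 // (negbTE pd).
pose G := g \Po ('X + (n%:Z)%:P); pose H := h \Po ('X + (n%:Z)%:P).
have GH : G * H = f \Po ('X + (n%:Z)%:P) by rewrite fgh comp_polyM.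
have cF : forall r, (G * H)`_r = (f^`N(r)).[n%:Z] by move=> r; rewrite GH coef_shift.
have G0e : G`_0 = g.[n%:Z] by rewrite coef_shift nderivn0.
have H0e : H`_0 = h.[n%:Z] by rewrite coef_shift nderivn0.
have hF : forall r, (r < l)%N -> (p ^ k %| absz ((G * H)`_r)%R)%N.
  by move=> r hr; rewrite cF; have := hdiv r hr.
have nl : ~~ (p %| absz ((G * H)`_l)%R)%N by rewrite cF; apply: hl.
have [s [sl nGs nHs]] : exists s, [/\ (s <= l)%N, ~~ (p %| absz (G`_s)%R)%N &
    ~~ (p %| absz (H`_(l - s))%R)%N].
  have [x /andP[n1 n2]|none] := pickP (fun x : 'I_l.+1 =>
      ~~ (p %| absz (G`_x)%R)%N && ~~ (p %| absz (H`_(l - x))%R)%N).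
    by exists x; split => //; rewrite -ltnS ltn_ord.
  exfalso; move/negP: nl; apply.
  have : (p%:Z %| (G * H)`_l)%Z; last by [].
  rewrite coefM; apply: rpred_sum => x _.
  have := none x; move/negbT; rewrite negb_and !negbK => /orP [hx|hx].
    by apply: dvdz_mulr.
  by apply: dvdz_mull.
have s0 : (0 < s)%N.
  by rewrite lt0n; apply: contra nGs => /eqP ->; rewrite G0e.
have sl' : (s < l)%N.
  by rewrite ltn_neqAle sl andbT; apply: contra nHs => /eqP ->; rewrite subnn H0e.
have G0 : G != 0 by apply: contra nGs => /eqP ->; rewrite coef0 dvdn0.
have H0 : H != 0 by apply: contra nHs => /eqP ->; rewrite coef0 dvdn0.
have G00 : G`_0 != 0 by rewrite G0e -absz_gt0.
have H00 : H`_0 != 0 by rewrite H0e -absz_gt0.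
have hv : (vp p G`_0 + vp p H`_0 = k)%N.
  rewrite /vp G0e H0e -/A -/B -lognM // AB (lognM _ pk0 d0).
  by rewrite pfactorK // logn_coprime ?addn0 // prime_coprime.
exact: (@weight_contra p k l G H s pp ckl G0 H0 hF s0 sl' nGs nHs G00 H00 hv).
Qed.
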